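(* Let \[P=\{(x,y)\in[0,3]^3\times[0,1]^3 : x_1+x_2+x_3=4,\ x_i\le 4y_i \text{ for } i=1,2,3\},\] \[P_U=\{(x,y,z)\in\mathbb{R}^3\times\mathbb{R}^3\times[0,1]^{3\times3} : (x,y)\in P,\ x_i=z_{i1}+2z_{i2}+3z_{i3},\ z_{i1}+z_{i2}+z_{i3}\le1 \text{ for } i=1,2,3\},\] \[P_{L+}=\{(x,y,z)\in\mathbb{R}^3\times\mathbb{R}^3\times[0,1]^{3\times2} : (x,y)\in P,\ x_i=z_{i1}+2z_{i2} \text{ for } i=1,2,3\},\] where all variables ($x$, $y$ and $z$) are integer variables. Then \[\operatorname{proj}_{x,y}\big(\mathrm{SC}(P_U)\big)\subsetneq\operatorname{proj}_{x,y}\big(\mathrm{SC}(P_{L+})\big).\]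
   Context: For $X\subseteq\mathbb{R}^N$ with all coordinates integer, the split closure is $\mathrm{SC}(X)=\bigcap\mathrm{conv}(X\setminus S)$, the intersection over all split sets $S=\{w\in\mathbb{R}^N:\pi_0<\pi^Tw<\pi_0+1\}$ with $\pi\in\mathbb{Z}^N$, $\pi_0\in\mathbb{Z}$. $\operatorname{proj}_{x,y}$ is orthogonal projection onto the $(x,y)$-coordinates. *)

(* Defs.v *)
From HB Require Import structures.
From mathcomp Require Import all_boot all_order all_algebra.
From mathcomp Require Import reals.
Set Implicit Arguments. Unset Strict Implicit. Unset Printing Implicit Defensive.
Import Order.TTheory GRing.Theory Num.Theory.
Local Open Scope ring_scope.

Definition conv (R : realType) (N : nat) (A : ('I_N -> R) -> Prop) (x : 'I_N -> R) : Prop :=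
  exists (n : nat) (lam : 'I_n -> R) (p : 'I_n -> 'I_N -> R),
    (forall i, 0 <= lam i) /\ \sum_(i < n) lam i = 1 /\
    (forall i, A (p i)) /\ (forall k, x k = \sum_(i < n) lam i * p i k).

Definition in_split (R : realType) (N : nat) (pi : 'I_N -> int) (pi0 : int) (w : 'I_N -> R) : Prop :=
  pi0%:~R < \sum_(k < N) (pi k)%:~R * w k < (pi0 + 1)%:~R.

Definition SC (R : realType) (N : nat) (X : ('I_N -> R) -> Prop) (x : 'I_N -> R) : Prop :=
  forall (pi : 'I_N -> int) (pi0 : int),
    conv (fun w => X w /\ ~ in_split pi pi0 w) x.

Definition coord (R : realType) (n : nat) (w : 'I_n.+1 -> R) (k : nat) : R := w (inord k).

Definition proj_xy (R : realType) (n : nat) (A : ('I_n.+1 -> R) -> Prop) (u : 'I_6 -> R) : Prop :=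
  exists w, A w /\ forall k : 'I_6, coord w k = u k.

Definition inP (R : realType) (x y : nat -> R) : Prop :=
  (forall i : 'I_3, 0 <= x i <= 3 /\ 0 <= y i <= 1) /\
  x 0%N + x 1%N + x 2%N = 4 /\
  (forall i : 'I_3, x i <= 4 * y i).

(* P_U in R^15: coordinates 0..2 = x, 3..5 = y, 6+3i+j = z_{i+1,j+1}. *)
Definition P_U (R : realType) (w : 'I_15 -> R) : Prop :=
  let x := fun i => coord w i in
  let y := fun i => coord w (3 + i) in
  let z := fun i j => coord w (6 + 3 * i + j) in
  inP x y /\
  (forall (i j : 'I_3), 0 <= z i j <= 1) /\
  (forall i : 'I_3, x i = z i 0%N + 2 * z i 1%N + 3 * z i 2%N) /\
  (forall i : 'I_3, z i 0%N + z i 1%N + z i 2%N <= 1).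

(* P_{L+} in R^12: coordinates 0..2 = x, 3..5 = y, 6+2i+j = z_{i+1,j+1}. *)
Definition P_Lplus (R : realType) (w : 'I_12 -> R) : Prop :=
  let x := fun i => coord w i in
  let y := fun i => coord w (3 + i) in
  let z := fun i j => coord w (6 + 2 * i + j) in
  inP x y /\
  (forall (i : 'I_3) (j : 'I_2), 0 <= z i j <= 1) /\
  (forall i : 'I_3, x i = z i 0%N + 2 * z i 1%N).

(* Main.v *)
Require Import Defs.
From HB Require Import structures.
From mathcomp Require Import all_boot all_order all_algebra.
From mathcomp Require Import reals.
From mathcomp Require Import lra zify.
Set Implicit Arguments. Unset Strict Implicit. Unset Printing Implicit Defensive.
Import Order.TTheory GRing.Theory Num.Theory.
Local Open Scope ring_scope.

Section Gen.
Variable R : realType.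

Definition gf N (pi : 'I_N -> int) (v : 'I_N -> R) : R := \sum_(k < N) (pi k)%:~R * v k.

Lemma not_split N pi pi0 (v : 'I_N -> R) :
  ~ in_split pi pi0 v -> gf pi v <= pi0%:~R \/ (pi0 + 1)%:~R <= gf pi v.
Proof.
rewrite /in_split /gf => H.
case: (lerP (\sum_(k < N) (pi k)%:~R * v k) pi0%:~R) => h1; first by left.
case: (lerP (pi0 + 1)%:~R (\sum_(k < N) (pi k)%:~R * v k)) => h2; first by right.
by exfalso; apply: H; rewrite h1 h2.
Qed.

Lemma conv_le N (A : ('I_N -> R) -> Prop) (a : 'I_N -> R) (b : R) w :
  conv A w -> (forall v, A v -> \sum_k a k * v k <= b) -> \sum_k a k * w k <= b.
Proof.
case=> n [lam [p [H0 [H1 [HA Hx]]]]] Hv.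
have -> : \sum_k a k * w k = \sum_(i < n) lam i * \sum_k a k * p i k.
  under eq_bigr => k _ do rewrite Hx mulr_sumr.
  rewrite exchange_big /=; apply: eq_bigr => i _; rewrite mulr_sumr.
  by apply: eq_bigr => k _; rewrite mulrCA.
apply: le_trans (_ : \sum_(i < n) lam i * b <= b).
  by apply: ler_sum => i _; apply: ler_wpM2l => //; apply: Hv.
by rewrite -mulr_suml H1 mul1r.
Qed.

Lemma split_cut N (A : ('I_N -> R) -> Prop) pi pi0 w :
  SC A w -> (forall v, A v -> ~ in_split pi pi0 v -> gf pi v <= pi0%:~R) -> gf pi w <= pi0%:~R.
Proof.
move=> HS Hv; apply: (conv_le (HS pi pi0)) => v [Av Hn]; exact: Hv.
Qed.

Definition lmap N1 N2 (M : 'I_N2 -> 'I_N1 -> int) (v : 'I_N1 -> R) : 'I_N2 -> R :=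
  fun k => \sum_l (M k l)%:~R * v l.

Lemma gf_lmap N1 N2 (M : 'I_N2 -> 'I_N1 -> int) pi v :
  gf pi (lmap M v) = gf (fun l => \sum_k pi k * M k l) v.
Proof.
rewrite /gf /lmap.
under eq_bigr => k _ do rewrite mulr_sumr.
rewrite exchange_big /=; apply: eq_bigr => l _.
rewrite rmorph_sum /= mulr_suml; apply: eq_bigr => k _.
by rewrite intrM mulrA.
Qed.

Lemma SC_lmap N1 N2 (M : 'I_N2 -> 'I_N1 -> int) (A : ('I_N1 -> R) -> Prop)
   (B : ('I_N2 -> R) -> Prop) w :
  (forall v, A v -> B (lmap M v)) -> SC A w -> SC B (lmap M w).
Proof.
move=> HAB HS pi pi0.
have [n [lam [p [H0 [H1 [HA Hx]]]]]] := HS (fun l => \sum_k pi k * M k l) pi0.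
exists n, lam, (fun i => lmap M (p i)); split => //; split => //; split.
  move=> i; have [Ai Hn] := HA i; split; first exact: HAB.
  by rewrite /in_split -/(gf _ _) gf_lmap.
move=> k; rewrite /lmap.
under eq_bigr => l _ do rewrite Hx mulr_sumr.
rewrite exchange_big /=; apply: eq_bigr => i _; rewrite mulr_sumr.
by apply: eq_bigr => l _; rewrite mulrCA.
Qed.

Lemma gf_shift N pi (w : 'I_N -> R) (d : 'I_N -> int) (s : R) :
  gf pi (fun k => w k + (d k)%:~R * s) = gf pi w + (\sum_k pi k * d k)%:~R * s.
Proof.
rewrite /gf rmorph_sum /= mulr_suml -big_split /=; apply: eq_bigr => k _.
by rewrite intrM mulrDr mulrA.
Qed.

Lemma half_SC N (A : ('I_N -> R) -> Prop) m (q : 'I_N -> int) (d : 'I_m -> 'I_N -> int) :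
  let w := fun k => (q k)%:~R + (\sum_j d j k)%:~R * 2^-1 in
  A w -> (forall j, A (fun k => w k + (d j k)%:~R * 2^-1)) ->
  (forall j, A (fun k => w k + (d j k)%:~R * (- 2^-1))) -> SC A w.
Proof.
move=> w HA Hp Hm pi pi0.
have gw : gf pi w = (\sum_k pi k * q k)%:~R + (\sum_j \sum_k pi k * d j k)%:~R * 2^-1.
  rewrite gf_shift; congr (_ + _ * _).
    rewrite /gf rmorph_sum; apply: eq_bigr => k _; by rewrite rmorphM.
  congr (_%:~R); under eq_bigr => k _ do rewrite mulr_sumr.
  by rewrite exchange_big.
case Hs: (pi0%:~R < gf pi w < (pi0 + 1)%:~R); last first.
  exists 1%N, (fun _ => 1), (fun _ => w); split => [//|]; split; first by rewrite big_ord1.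
  split; first by move=> _; split => //; rewrite /in_split -/(gf _ _) Hs.
  by move=> k; rewrite big_ord1 mul1r.
set Q := \sum_k pi k * q k in gw.
set kk := fun j => \sum_k pi k * d j k.
set K := \sum_j \sum_k pi k * d j k in gw.
have HK : (2 * Q + K = 2 * pi0 + 1)%R.
  move: Hs; rewrite gw => /andP [h1 h2].
  have h1' : ((2 * pi0)%:~R < (2 * Q + K)%:~R :> R).
    by rewrite !intrD !intrM /=; lra.
  have h2' : ((2 * Q + K)%:~R < (2 * pi0 + 2)%:~R :> R).
    by rewrite !intrD !intrM /=; rewrite intrD in h2; lra.
  rewrite ltr_int in h1'; rewrite ltr_int in h2'; lia.
have [j Hj] : exists j, kk j != 0.
  case: (boolP [exists j, kk j != 0]) => [/existsP //|/existsPn Hall]; exfalso.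
  have K0 : K = 0 by rewrite /K big1 // => j _; apply/eqP; move: (Hall j); rewrite negbK.
  move: HK; rewrite K0; lia.
have gwR : gf pi w = pi0%:~R + 2^-1.
  rewrite gw; have := congr1 (fun z : int => z%:~R : R) HK => /=.
  rewrite !intrD !intrM /= => E; lra.
have Hkj : (1 <= (kk j)%:~R :> R) \/ ((kk j)%:~R <= -1 :> R).
  have : (1 <= kk j)%R \/ (kk j <= -1)%R by lia.
  by case=> h; [left; rewrite ler1z | right; move: h; rewrite -(ler_int R) => h; lra].
pose p : 'I_2 -> 'I_N -> R := fun i => if val i == 0%N then
   (fun k => w k + (d j k)%:~R * 2^-1) else (fun k => w k + (d j k)%:~R * (- 2^-1)).
exists 2%N, (fun _ => 2^-1), p; split => [i|]; first lra.
split; first by rewrite !big_ord_recr big_ord0 /=; lra.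
split.
  move=> i; rewrite /p; case: ifP => _; split => //;
  rewrite /in_split -/(gf _ _) gf_shift gwR -/(kk j) => /andP [h1 h2];
  rewrite intrD /= in h2; lra.
by move=> k; rewrite !big_ord_recr big_ord0 /= /p /=; lra.
Qed.


Local Notation cd := Defs.coord.

Definition PUf (v : 'I_15 -> R) : Prop := (0 <= cd v 0) /\ (cd v 0 <= 3) /\ (0 <= cd v 3) /\ (cd v 3 <= 1) /\ (cd v 0 <= 4 * cd v 3) /\ (0 <= cd v 1) /\ (cd v 1 <= 3) /\ (0 <= cd v 4) /\ (cd v 4 <= 1) /\ (cd v 1 <= 4 * cd v 4) /\ (0 <= cd v 2) /\ (cd v 2 <= 3) /\ (0 <= cd v 5) /\ (cd v 5 <= 1) /\ (cd v 2 <= 4 * cd v 5) /\ (cd v 0 + cd v 1 + cd v 2 = 4) /\ (0 <= cd v 6) /\ (cd v 6 <= 1) /\ (0 <= cd v 7) /\ (cd v 7 <= 1) /\ (0 <= cd v 8) /\ (cd v 8 <= 1) /\ (0 <= cd v 9) /\ (cd v 9 <= 1) /\ (0 <= cd v 10) /\ (cd v 10 <= 1) /\ (0 <= cd v 11) /\ (cd v 11 <= 1) /\ (0 <= cd v 12) /\ (cd v 12 <= 1) /\ (0 <= cd v 13) /\ (cd v 13 <= 1) /\ (0 <= cd v 14) /\ (cd v 14 <= 1) /\ (cd v 0 = cd v 6 + 2 * cd v 7 + 3 * cd v 8) /\ (cd v 1 = cd v 9 + 2 * cd v 10 + 3 * cd v 11) /\ (cd v 2 = cd v 12 + 2 * cd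 v 13 + 3 * cd v 14) /\ (cd v 6 + cd v 7 + cd v 8 <= 1) /\ (cd v 9 + cd v 10 + cd v 11 <= 1) /\ (cd v 12 + cd v 13 + cd v 14 <= 1).
Definition PLf (v : 'I_12 -> R) : Prop := (0 <= cd v 0) /\ (cd v 0 <= 3) /\ (0 <= cd v 3) /\ (cd v 3 <= 1) /\ (cd v 0 <= 4 * cd v 3) /\ (0 <= cd v 1) /\ (cd v 1 <= 3) /\ (0 <= cd v 4) /\ (cd v 4 <= 1) /\ (cd v 1 <= 4 * cd v 4) /\ (0 <= cd v 2) /\ (cd v 2 <= 3) /\ (0 <= cd v 5) /\ (cd v 5 <= 1) /\ (cd v 2 <= 4 * cd v 5) /\ (cd v 0 + cd v 1 + cd v 2 = 4) /\ (0 <= cd v 6) /\ (cd v 6 <= 1) /\ (0 <= cd v 7) /\ (cd v 7 <= 1) /\ (0 <= cd v 8) /\ (cd v 8 <= 1) /\ (0 <= cd v 9) /\ (cd v 9 <= 1) /\ (0 <= cd v 10) /\ (cd v 10 <= 1) /\ (0 <= cd v 11) /\ (cd v 11 <= 1) /\ (cd v 0 = cd v 6 + 2 * cd v 7) /\ (cd v 1 = cd v 8 + 2 * cd v 9) /\ (cd v 2 = cd v 10 + 2 * cd v 11).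

Lemma PU_flat v : P_U v -> PUf v.
Proof.
move=> [[Hb [Hs Hxy]] [Hz [Hx Hsum]]].
have O0 : (0 < 3)%N by []. have O1 : (1 < 3)%N by []. have O2 : (2 < 3)%N by [].
move: (Hb (Ordinal O0)) (Hb (Ordinal O1)) (Hb (Ordinal O2)) => [/andP[? ?] /andP[? ?]] [/andP[? ?] /andP[? ?]] [/andP[? ?] /andP[? ?]].
move: (Hxy (Ordinal O0)) (Hxy (Ordinal O1)) (Hxy (Ordinal O2)) => ? ? ?.
move: (Hx (Ordinal O0)) (Hx (Ordinal O1)) (Hx (Ordinal O2)) => ? ? ?.
move: (Hsum (Ordinal O0)) (Hsum (Ordinal O1)) (Hsum (Ordinal O2)) => ? ? ?.
move: (Hz (Ordinal O0)) (Hz (Ordinal O1)) (Hz (Ordinal O2)) => Z0 Z1 Z2.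
move: (Z0 (Ordinal O0)) (Z0 (Ordinal O1)) (Z0 (Ordinal O2)) => /andP[? ?] /andP[? ?] /andP[? ?].
move: (Z1 (Ordinal O0)) (Z1 (Ordinal O1)) (Z1 (Ordinal O2)) => /andP[? ?] /andP[? ?] /andP[? ?].
move: (Z2 (Ordinal O0)) (Z2 (Ordinal O1)) (Z2 (Ordinal O2)) => /andP[? ?] /andP[? ?] /andP[? ?].
rewrite /PUf; repeat split; assumption.
Qed.

Lemma PL_unflat v : PLf v -> P_Lplus v.
Proof.
move=> [h0 [h1 [h2 [h3 [h4 [h5 [h6 [h7 [h8 [h9 [h10 [h11 [h12 [h13 [h14 [h15 [h16 [h17 [h18 [h19 [h20 [h21 [h22 [h23 [h24 [h25 [h26 [h27 [h28 [h29 h30]]]]]]]]]]]]]]]]]]]]]]]]]]]]]].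
split; [split; [|split]|split].
- by move=> [[|[|[|//]]] Hi]; split; apply/andP; split.
- done.
- by move=> [[|[|[|//]]] Hi].
- by move=> [[|[|[|//]]] Hi] [[|[|//]] Hj]; apply/andP; split.
- by move=> [[|[|[|//]]] Hi].
Qed.


Lemma sum_coord n (F : nat -> R -> R) (w : 'I_n.+1 -> R) :
  \sum_(l < n.+1) F (val l) (w l) = \sum_(0 <= l < n.+1) F l (cd w l).
Proof. rewrite big_mkord; apply: eq_bigr => l _; by rewrite /Defs.coord inord_val. Qed.

Lemma PU_cut (s : seq int) (pi0 : int) w : SC (@P_U R) w ->
  (forall v, PUf v -> ((\sum_(0 <= l < 15) (nth 0 s l)%:~R * cd v l <= pi0%:~R) \/
      ((pi0 + 1)%:~R <= \sum_(0 <= l < 15) (nth 0 s l)%:~R * cd v l)) ->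
      \sum_(0 <= l < 15) (nth 0 s l)%:~R * cd v l <= pi0%:~R) ->
  \sum_(0 <= l < 15) (nth 0 s l)%:~R * cd w l <= pi0%:~R.
Proof.
move=> HS Hv.
have := split_cut (pi := fun k : 'I_15 => nth 0 s (val k)) (pi0 := pi0) HS.
rewrite /gf (@sum_coord 14 (fun l x => (nth 0 s l)%:~R * x)); apply => v Av Hn.
have := not_split Hn; rewrite /gf (@sum_coord 14 (fun l x => (nth 0 s l)%:~R * x)).
by apply: Hv; apply: PU_flat.
Qed.

Lemma cutU0 w : SC (@P_U R) w -> (- 1) * cd w 3 + (1) * cd w 6 + (1) * cd w 7 + (1) * cd w 8 <= 0.
Proof.
move=> HS.
have K : \sum_(0 <= l < 15) (nth 0 [:: (0)%R; (0)%R; (0)%R; (- 1)%R; (0)%R; (0)%R; (1)%R; (1)%R; (1)%R; (0)%R; (0)%R; (0)%R; (0)%R; (0)%R; (0)%R] l)%:~R * cd w l <= (0%R)%:~R.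
  apply: (PU_cut HS) => v F H; move: F => [h0 [h1 [h2 [h3 [h4 [h5 [h6 [h7 [h8 [h9 [h10 [h11 [h12 [h13 [h14 [h15 [h16 [h17 [h18 [h19 [h20 [h21 [h22 [h23 [h24 [h25 [h26 [h27 [h28 [h29 [h30 [h31 [h32 [h33 [h34 [h35 [h36 [h37 [h38 h39]]]]]]]]]]]]]]]]]]]]]]]]]]]]]]]]]]]]]]]; move: H.
  rewrite /index_iota /= !big_cons big_nil /= ?mulr0z ?mulr1z ?mulrN1z ?mul0r ?add0r ?addr0 ?mul1r ?mulN1r => H.
  clear h5 h6 h7 h8 h9 h10 h11 h12 h13 h14 h15 h22 h23 h24 h25 h26 h27 h28 h29 h30 h31 h32 h33 h35 h36 h38 h39.
  by case: H => H; lra.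
move: K; rewrite /index_iota /= !big_cons big_nil /= ?mulr0z ?mulr1z ?mulrN1z ?mul0r ?add0r ?addr0 ?mul1r ?mulN1r => K; lra.
Qed.

Lemma cutU1 w : SC (@P_U R) w -> (- 1) * cd w 4 + (1) * cd w 9 + (1) * cd w 10 + (1) * cd w 11 <= 0.
Proof.
move=> HS.
have K : \sum_(0 <= l < 15) (nth 0 [:: (0)%R; (0)%R; (0)%R; (0)%R; (- 1)%R; (0)%R; (0)%R; (0)%R; (0)%R; (1)%R; (1)%R; (1)%R; (0)%R; (0)%R; (0)%R] l)%:~R * cd w l <= (0%R)%:~R.
  apply: (PU_cut HS) => v F H; move: F => [h0 [h1 [h2 [h3 [h4 [h5 [h6 [h7 [h8 [h9 [h10 [h11 [h12 [h13 [h14 [h15 [h16 [h17 [h18 [h19 [h20 [h21 [h22 [h23 [h24 [h25 [h26 [h27 [h28 [h29 [h30 [h31 [h32 [h33 [h34 [h35 [h36 [h37 [h38 h39]]]]]]]]]]]]]]]]]]]]]]]]]]]]]]]]]]]]]]]; move: H.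
  rewrite /index_iota /= !big_cons big_nil /= ?mulr0z ?mulr1z ?mulrN1z ?mul0r ?add0r ?addr0 ?mul1r ?mulN1r => H.
  clear h0 h1 h2 h3 h4 h10 h11 h12 h13 h14 h15 h16 h17 h18 h19 h20 h21 h28 h29 h30 h31 h32 h33 h34 h36 h37 h39.
  by case: H => H; lra.
move: K; rewrite /index_iota /= !big_cons big_nil /= ?mulr0z ?mulr1z ?mulrN1z ?mul0r ?add0r ?addr0 ?mul1r ?mulN1r => K; lra.
Qed.

Lemma cutU2 w : SC (@P_U R) w -> (- 1) * cd w 5 + (1) * cd w 12 + (1) * cd w 13 + (1) * cd w 14 <= 0.
Proof.
move=> HS.
have K : \sum_(0 <= l < 15) (nth 0 [:: (0)%R; (0)%R; (0)%R; (0)%R; (0)%R; (- 1)%R; (0)%R; (0)%R; (0)%R; (0)%R; (0)%R; (0)%R; (1)%R; (1)%R; (1)%R] l)%:~R * cd w l <= (0%R)%:~R.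
  apply: (PU_cut HS) => v F H; move: F => [h0 [h1 [h2 [h3 [h4 [h5 [h6 [h7 [h8 [h9 [h10 [h11 [h12 [h13 [h14 [h15 [h16 [h17 [h18 [h19 [h20 [h21 [h22 [h23 [h24 [h25 [h26 [h27 [h28 [h29 [h30 [h31 [h32 [h33 [h34 [h35 [h36 [h37 [h38 h39]]]]]]]]]]]]]]]]]]]]]]]]]]]]]]]]]]]]]]]; move: H.
  rewrite /index_iota /= !big_cons big_nil /= ?mulr0z ?mulr1z ?mulrN1z ?mul0r ?add0r ?addr0 ?mul1r ?mulN1r => H.
  clear h0 h1 h2 h3 h4 h5 h6 h7 h8 h9 h15 h16 h17 h18 h19 h20 h21 h22 h23 h24 h25 h26 h27 h34 h35 h37 h38.
  by case: H => H; lra.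
move: K; rewrite /index_iota /= !big_cons big_nil /= ?mulr0z ?mulr1z ?mulrN1z ?mul0r ?add0r ?addr0 ?mul1r ?mulN1r => K; lra.
Qed.

Lemma cutU3 w : SC (@P_U R) w -> (1) * cd w 8 + (1) * cd w 11 + (1) * cd w 13 + (1) * cd w 14 <= 1.
Proof.
move=> HS.
have K : \sum_(0 <= l < 15) (nth 0 [:: (0)%R; (0)%R; (0)%R; (0)%R; (0)%R; (0)%R; (0)%R; (0)%R; (1)%R; (0)%R; (0)%R; (1)%R; (0)%R; (1)%R; (1)%R] l)%:~R * cd w l <= (1%R)%:~R.
  apply: (PU_cut HS) => v F H; move: F => [h0 [h1 [h2 [h3 [h4 [h5 [h6 [h7 [h8 [h9 [h10 [h11 [h12 [h13 [h14 [h15 [h16 [h17 [h18 [h19 [h20 [h21 [h22 [h23 [h24 [h25 [h26 [h27 [h28 [h29 [h30 [h31 [h32 [h33 [h34 [h35 [h36 [h37 [h38 h39]]]]]]]]]]]]]]]]]]]]]]]]]]]]]]]]]]]]]]]; move: H.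
  rewrite /index_iota /= !big_cons big_nil /= ?mulr0z ?mulr1z ?mulrN1z ?mul0r ?add0r ?addr0 ?mul1r ?mulN1r => H.
  clear h2 h3 h4 h7 h8 h9 h12 h13 h14.
  by case: H => H; lra.
move: K; rewrite /index_iota /= !big_cons big_nil /= ?mulr0z ?mulr1z ?mulrN1z ?mul0r ?add0r ?addr0 ?mul1r ?mulN1r => K; lra.
Qed.

Lemma cutU4 w : SC (@P_U R) w -> (- 1) * cd w 6 <= 0.
Proof.
move=> HS.
have K : \sum_(0 <= l < 15) (nth 0 [:: (0)%R; (0)%R; (0)%R; (0)%R; (0)%R; (0)%R; (- 1)%R; (0)%R; (0)%R; (0)%R; (0)%R; (0)%R; (0)%R; (0)%R; (0)%R] l)%:~R * cd w l <= (0%R)%:~R.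
  apply: (PU_cut HS) => v F H; move: F => [h0 [h1 [h2 [h3 [h4 [h5 [h6 [h7 [h8 [h9 [h10 [h11 [h12 [h13 [h14 [h15 [h16 [h17 [h18 [h19 [h20 [h21 [h22 [h23 [h24 [h25 [h26 [h27 [h28 [h29 [h30 [h31 [h32 [h33 [h34 [h35 [h36 [h37 [h38 h39]]]]]]]]]]]]]]]]]]]]]]]]]]]]]]]]]]]]]]]; move: H.
  rewrite /index_iota /= !big_cons big_nil /= ?mulr0z ?mulr1z ?mulrN1z ?mul0r ?add0r ?addr0 ?mul1r ?mulN1r => H.
  clear h0 h1 h2 h3 h4 h5 h6 h7 h8 h9 h10 h11 h12 h13 h14 h15 h18 h19 h20 h21 h22 h23 h24 h25 h26 h27 h28 h29 h30 h31 h32 h33 h34 h35 h36 h37 h38 h39.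
  by case: H => H; lra.
move: K; rewrite /index_iota /= !big_cons big_nil /= ?mulr0z ?mulr1z ?mulrN1z ?mul0r ?add0r ?addr0 ?mul1r ?mulN1r => K; lra.
Qed.

Lemma cutU5 w : SC (@P_U R) w -> (- 1) * cd w 7 <= 0.
Proof.
move=> HS.
have K : \sum_(0 <= l < 15) (nth 0 [:: (0)%R; (0)%R; (0)%R; (0)%R; (0)%R; (0)%R; (0)%R; (- 1)%R; (0)%R; (0)%R; (0)%R; (0)%R; (0)%R; (0)%R; (0)%R] l)%:~R * cd w l <= (0%R)%:~R.
  apply: (PU_cut HS) => v F H; move: F => [h0 [h1 [h2 [h3 [h4 [h5 [h6 [h7 [h8 [h9 [h10 [h11 [h12 [h13 [h14 [h15 [h16 [h17 [h18 [h19 [h20 [h21 [h22 [h23 [h24 [h25 [h26 [h27 [h28 [h29 [h30 [h31 [h32 [h33 [h34 [h35 [h36 [h37 [h38 h39]]]]]]]]]]]]]]]]]]]]]]]]]]]]]]]]]]]]]]]; move: H.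
  rewrite /index_iota /= !big_cons big_nil /= ?mulr0z ?mulr1z ?mulrN1z ?mul0r ?add0r ?addr0 ?mul1r ?mulN1r => H.
  clear h0 h1 h2 h3 h4 h5 h6 h7 h8 h9 h10 h11 h12 h13 h14 h15 h16 h17 h20 h21 h22 h23 h24 h25 h26 h27 h28 h29 h30 h31 h32 h33 h34 h35 h36 h37 h38 h39.
  by case: H => H; lra.
move: K; rewrite /index_iota /= !big_cons big_nil /= ?mulr0z ?mulr1z ?mulrN1z ?mul0r ?add0r ?addr0 ?mul1r ?mulN1r => K; lra.
Qed.

Lemma cutU6 w : SC (@P_U R) w -> (- 1) * cd w 9 <= 0.
Proof.
move=> HS.
have K : \sum_(0 <= l < 15) (nth 0 [:: (0)%R; (0)%R; (0)%R; (0)%R; (0)%R; (0)%R; (0)%R; (0)%R; (0)%R; (- 1)%R; (0)%R; (0)%R; (0)%R; (0)%R; (0)%R] l)%:~R * cd w l <= (0%R)%:~R.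
  apply: (PU_cut HS) => v F H; move: F => [h0 [h1 [h2 [h3 [h4 [h5 [h6 [h7 [h8 [h9 [h10 [h11 [h12 [h13 [h14 [h15 [h16 [h17 [h18 [h19 [h20 [h21 [h22 [h23 [h24 [h25 [h26 [h27 [h28 [h29 [h30 [h31 [h32 [h33 [h34 [h35 [h36 [h37 [h38 h39]]]]]]]]]]]]]]]]]]]]]]]]]]]]]]]]]]]]]]]; move: H.
  rewrite /index_iota /= !big_cons big_nil /= ?mulr0z ?mulr1z ?mulrN1z ?mul0r ?add0r ?addr0 ?mul1r ?mulN1r => H.
  clear h0 h1 h2 h3 h4 h5 h6 h7 h8 h9 h10 h11 h12 h13 h14 h15 h16 h17 h18 h19 h20 h21 h24 h25 h26 h27 h28 h29 h30 h31 h32 h33 h34 h35 h36 h37 h38 h39.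
  by case: H => H; lra.
move: K; rewrite /index_iota /= !big_cons big_nil /= ?mulr0z ?mulr1z ?mulrN1z ?mul0r ?add0r ?addr0 ?mul1r ?mulN1r => K; lra.
Qed.

Lemma cutU7 w : SC (@P_U R) w -> (- 1) * cd w 10 <= 0.
Proof.
move=> HS.
have K : \sum_(0 <= l < 15) (nth 0 [:: (0)%R; (0)%R; (0)%R; (0)%R; (0)%R; (0)%R; (0)%R; (0)%R; (0)%R; (0)%R; (- 1)%R; (0)%R; (0)%R; (0)%R; (0)%R] l)%:~R * cd w l <= (0%R)%:~R.
  apply: (PU_cut HS) => v F H; move: F => [h0 [h1 [h2 [h3 [h4 [h5 [h6 [h7 [h8 [h9 [h10 [h11 [h12 [h13 [h14 [h15 [h16 [h17 [h18 [h19 [h20 [h21 [h22 [h23 [h24 [h25 [h26 [h27 [h28 [h29 [h30 [h31 [h32 [h33 [h34 [h35 [h36 [h37 [h38 h39]]]]]]]]]]]]]]]]]]]]]]]]]]]]]]]]]]]]]]]; move: H.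
  rewrite /index_iota /= !big_cons big_nil /= ?mulr0z ?mulr1z ?mulrN1z ?mul0r ?add0r ?addr0 ?mul1r ?mulN1r => H.
  clear h0 h1 h2 h3 h4 h5 h6 h7 h8 h9 h10 h11 h12 h13 h14 h15 h16 h17 h18 h19 h20 h21 h22 h23 h26 h27 h28 h29 h30 h31 h32 h33 h34 h35 h36 h37 h38 h39.
  by case: H => H; lra.
move: K; rewrite /index_iota /= !big_cons big_nil /= ?mulr0z ?mulr1z ?mulrN1z ?mul0r ?add0r ?addr0 ?mul1r ?mulN1r => K; lra.
Qed.

Lemma cutU8 w : SC (@P_U R) w -> (- 1) * cd w 13 <= 0.
Proof.
move=> HS.
have K : \sum_(0 <= l < 15) (nth 0 [:: (0)%R; (0)%R; (0)%R; (0)%R; (0)%R; (0)%R; (0)%R; (0)%R; (0)%R; (0)%R; (0)%R; (0)%R; (0)%R; (- 1)%R; (0)%R] l)%:~R * cd w l <= (0%R)%:~R.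
  apply: (PU_cut HS) => v F H; move: F => [h0 [h1 [h2 [h3 [h4 [h5 [h6 [h7 [h8 [h9 [h10 [h11 [h12 [h13 [h14 [h15 [h16 [h17 [h18 [h19 [h20 [h21 [h22 [h23 [h24 [h25 [h26 [h27 [h28 [h29 [h30 [h31 [h32 [h33 [h34 [h35 [h36 [h37 [h38 h39]]]]]]]]]]]]]]]]]]]]]]]]]]]]]]]]]]]]]]]; move: H.
  rewrite /index_iota /= !big_cons big_nil /= ?mulr0z ?mulr1z ?mulrN1z ?mul0r ?add0r ?addr0 ?mul1r ?mulN1r => H.
  clear h0 h1 h2 h3 h4 h5 h6 h7 h8 h9 h10 h11 h12 h13 h14 h15 h16 h17 h18 h19 h20 h21 h22 h23 h24 h25 h26 h27 h28 h29 h32 h33 h34 h35 h36 h37 h38 h39.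
  by case: H => H; lra.
move: K; rewrite /index_iota /= !big_cons big_nil /= ?mulr0z ?mulr1z ?mulrN1z ?mul0r ?add0r ?addr0 ?mul1r ?mulN1r => K; lra.
Qed.

Lemma cutU9 w : SC (@P_U R) w -> (- 1) * cd w 14 <= 0.
Proof.
move=> HS.
have K : \sum_(0 <= l < 15) (nth 0 [:: (0)%R; (0)%R; (0)%R; (0)%R; (0)%R; (0)%R; (0)%R; (0)%R; (0)%R; (0)%R; (0)%R; (0)%R; (0)%R; (0)%R; (- 1)%R] l)%:~R * cd w l <= (0%R)%:~R.
  apply: (PU_cut HS) => v F H; move: F => [h0 [h1 [h2 [h3 [h4 [h5 [h6 [h7 [h8 [h9 [h10 [h11 [h12 [h13 [h14 [h15 [h16 [h17 [h18 [h19 [h20 [h21 [h22 [h23 [h24 [h25 [h26 [h27 [h28 [h29 [h30 [h31 [h32 [h33 [h34 [h35 [h36 [h37 [h38 h39]]]]]]]]]]]]]]]]]]]]]]]]]]]]]]]]]]]]]]]; move: H.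
  rewrite /index_iota /= !big_cons big_nil /= ?mulr0z ?mulr1z ?mulrN1z ?mul0r ?add0r ?addr0 ?mul1r ?mulN1r => H.
  clear h0 h1 h2 h3 h4 h5 h6 h7 h8 h9 h10 h11 h12 h13 h14 h15 h16 h17 h18 h19 h20 h21 h22 h23 h24 h25 h26 h27 h28 h29 h30 h31 h34 h35 h36 h37 h38 h39.
  by case: H => H; lra.
move: K; rewrite /index_iota /= !big_cons big_nil /= ?mulr0z ?mulr1z ?mulrN1z ?mul0r ?add0r ?addr0 ?mul1r ?mulN1r => K; lra.
Qed.

Lemma cutU10 w : SC (@P_U R) w -> (1) * cd w 0 + (- 1) * cd w 6 + (- 2) * cd w 7 + (- 3) * cd w 8 <= 0.
Proof.
move=> HS.
have K : \sum_(0 <= l < 15) (nth 0 [:: (1)%R; (0)%R; (0)%R; (0)%R; (0)%R; (0)%R; (- 1)%R; (- 2)%R; (- 3)%R; (0)%R; (0)%R; (0)%R; (0)%R; (0)%R; (0)%R] l)%:~R * cd w l <= (0%R)%:~R.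
  apply: (PU_cut HS) => v F H; move: F => [h0 [h1 [h2 [h3 [h4 [h5 [h6 [h7 [h8 [h9 [h10 [h11 [h12 [h13 [h14 [h15 [h16 [h17 [h18 [h19 [h20 [h21 [h22 [h23 [h24 [h25 [h26 [h27 [h28 [h29 [h30 [h31 [h32 [h33 [h34 [h35 [h36 [h37 [h38 h39]]]]]]]]]]]]]]]]]]]]]]]]]]]]]]]]]]]]]]]; move: H.
  rewrite /index_iota /= !big_cons big_nil /= ?mulr0z ?mulr1z ?mulrN1z ?mul0r ?add0r ?addr0 ?mul1r ?mulN1r => H.
  clear h2 h3 h4 h5 h6 h7 h8 h9 h10 h11 h12 h13 h14 h15 h22 h23 h24 h25 h26 h27 h28 h29 h30 h31 h32 h33 h35 h36 h38 h39.
  by case: H => H; lra.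
move: K; rewrite /index_iota /= !big_cons big_nil /= ?mulr0z ?mulr1z ?mulrN1z ?mul0r ?add0r ?addr0 ?mul1r ?mulN1r => K; lra.
Qed.

Lemma cutU11 w : SC (@P_U R) w -> (- 1) * cd w 0 + (1) * cd w 6 + (2) * cd w 7 + (3) * cd w 8 <= 0.
Proof.
move=> HS.
have K : \sum_(0 <= l < 15) (nth 0 [:: (- 1)%R; (0)%R; (0)%R; (0)%R; (0)%R; (0)%R; (1)%R; (2)%R; (3)%R; (0)%R; (0)%R; (0)%R; (0)%R; (0)%R; (0)%R] l)%:~R * cd w l <= (0%R)%:~R.
  apply: (PU_cut HS) => v F H; move: F => [h0 [h1 [h2 [h3 [h4 [h5 [h6 [h7 [h8 [h9 [h10 [h11 [h12 [h13 [h14 [h15 [h16 [h17 [h18 [h19 [h20 [h21 [h22 [h23 [h24 [h25 [h26 [h27 [h28 [h29 [h30 [h31 [h32 [h33 [h34 [h35 [h36 [h37 [h38 h39]]]]]]]]]]]]]]]]]]]]]]]]]]]]]]]]]]]]]]]; move: H.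
  rewrite /index_iota /= !big_cons big_nil /= ?mulr0z ?mulr1z ?mulrN1z ?mul0r ?add0r ?addr0 ?mul1r ?mulN1r => H.
  clear h2 h3 h4 h5 h6 h7 h8 h9 h10 h11 h12 h13 h14 h15 h22 h23 h24 h25 h26 h27 h28 h29 h30 h31 h32 h33 h35 h36 h38 h39.
  by case: H => H; lra.
move: K; rewrite /index_iota /= !big_cons big_nil /= ?mulr0z ?mulr1z ?mulrN1z ?mul0r ?add0r ?addr0 ?mul1r ?mulN1r => K; lra.
Qed.

Lemma cutU12 w : SC (@P_U R) w -> (1) * cd w 1 + (- 1) * cd w 9 + (- 2) * cd w 10 + (- 3) * cd w 11 <= 0.
Proof.
move=> HS.
have K : \sum_(0 <= l < 15) (nth 0 [:: (0)%R; (1)%R; (0)%R; (0)%R; (0)%R; (0)%R; (0)%R; (0)%R; (0)%R; (- 1)%R; (- 2)%R; (- 3)%R; (0)%R; (0)%R; (0)%R] l)%:~R * cd w l <= (0%R)%:~R.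
  apply: (PU_cut HS) => v F H; move: F => [h0 [h1 [h2 [h3 [h4 [h5 [h6 [h7 [h8 [h9 [h10 [h11 [h12 [h13 [h14 [h15 [h16 [h17 [h18 [h19 [h20 [h21 [h22 [h23 [h24 [h25 [h26 [h27 [h28 [h29 [h30 [h31 [h32 [h33 [h34 [h35 [h36 [h37 [h38 h39]]]]]]]]]]]]]]]]]]]]]]]]]]]]]]]]]]]]]]]; move: H.
  rewrite /index_iota /= !big_cons big_nil /= ?mulr0z ?mulr1z ?mulrN1z ?mul0r ?add0r ?addr0 ?mul1r ?mulN1r => H.
  clear h0 h1 h2 h3 h4 h7 h8 h9 h10 h11 h12 h13 h14 h15 h16 h17 h18 h19 h20 h21 h28 h29 h30 h31 h32 h33 h34 h36 h37 h39.
  by case: H => H; lra.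
move: K; rewrite /index_iota /= !big_cons big_nil /= ?mulr0z ?mulr1z ?mulrN1z ?mul0r ?add0r ?addr0 ?mul1r ?mulN1r => K; lra.
Qed.

Lemma cutU13 w : SC (@P_U R) w -> (- 1) * cd w 1 + (1) * cd w 9 + (2) * cd w 10 + (3) * cd w 11 <= 0.
Proof.
move=> HS.
have K : \sum_(0 <= l < 15) (nth 0 [:: (0)%R; (- 1)%R; (0)%R; (0)%R; (0)%R; (0)%R; (0)%R; (0)%R; (0)%R; (1)%R; (2)%R; (3)%R; (0)%R; (0)%R; (0)%R] l)%:~R * cd w l <= (0%R)%:~R.
  apply: (PU_cut HS) => v F H; move: F => [h0 [h1 [h2 [h3 [h4 [h5 [h6 [h7 [h8 [h9 [h10 [h11 [h12 [h13 [h14 [h15 [h16 [h17 [h18 [h19 [h20 [h21 [h22 [h23 [h24 [h25 [h26 [h27 [h28 [h29 [h30 [h31 [h32 [h33 [h34 [h35 [h36 [h37 [h38 h39]]]]]]]]]]]]]]]]]]]]]]]]]]]]]]]]]]]]]]]; move: H.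
  rewrite /index_iota /= !big_cons big_nil /= ?mulr0z ?mulr1z ?mulrN1z ?mul0r ?add0r ?addr0 ?mul1r ?mulN1r => H.
  clear h0 h1 h2 h3 h4 h7 h8 h9 h10 h11 h12 h13 h14 h15 h16 h17 h18 h19 h20 h21 h28 h29 h30 h31 h32 h33 h34 h36 h37 h39.
  by case: H => H; lra.
move: K; rewrite /index_iota /= !big_cons big_nil /= ?mulr0z ?mulr1z ?mulrN1z ?mul0r ?add0r ?addr0 ?mul1r ?mulN1r => K; lra.
Qed.

Lemma cutU14 w : SC (@P_U R) w -> (1) * cd w 2 + (- 1) * cd w 12 + (- 2) * cd w 13 + (- 3) * cd w 14 <= 0.
Proof.
move=> HS.
have K : \sum_(0 <= l < 15) (nth 0 [:: (0)%R; (0)%R; (1)%R; (0)%R; (0)%R; (0)%R; (0)%R; (0)%R; (0)%R; (0)%R; (0)%R; (0)%R; (- 1)%R; (- 2)%R; (- 3)%R] l)%:~R * cd w l <= (0%R)%:~R.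
  apply: (PU_cut HS) => v F H; move: F => [h0 [h1 [h2 [h3 [h4 [h5 [h6 [h7 [h8 [h9 [h10 [h11 [h12 [h13 [h14 [h15 [h16 [h17 [h18 [h19 [h20 [h21 [h22 [h23 [h24 [h25 [h26 [h27 [h28 [h29 [h30 [h31 [h32 [h33 [h34 [h35 [h36 [h37 [h38 h39]]]]]]]]]]]]]]]]]]]]]]]]]]]]]]]]]]]]]]]; move: H.
  rewrite /index_iota /= !big_cons big_nil /= ?mulr0z ?mulr1z ?mulrN1z ?mul0r ?add0r ?addr0 ?mul1r ?mulN1r => H.
  clear h0 h1 h2 h3 h4 h5 h6 h7 h8 h9 h12 h13 h14 h15 h16 h17 h18 h19 h20 h21 h22 h23 h24 h25 h26 h27 h34 h35 h37 h38.
  by case: H => H; lra.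
move: K; rewrite /index_iota /= !big_cons big_nil /= ?mulr0z ?mulr1z ?mulrN1z ?mul0r ?add0r ?addr0 ?mul1r ?mulN1r => K; lra.
Qed.

Lemma cutU15 w : SC (@P_U R) w -> (- 1) * cd w 2 + (1) * cd w 12 + (2) * cd w 13 + (3) * cd w 14 <= 0.
Proof.
move=> HS.
have K : \sum_(0 <= l < 15) (nth 0 [:: (0)%R; (0)%R; (- 1)%R; (0)%R; (0)%R; (0)%R; (0)%R; (0)%R; (0)%R; (0)%R; (0)%R; (0)%R; (1)%R; (2)%R; (3)%R] l)%:~R * cd w l <= (0%R)%:~R.
  apply: (PU_cut HS) => v F H; move: F => [h0 [h1 [h2 [h3 [h4 [h5 [h6 [h7 [h8 [h9 [h10 [h11 [h12 [h13 [h14 [h15 [h16 [h17 [h18 [h19 [h20 [h21 [h22 [h23 [h24 [h25 [h26 [h27 [h28 [h29 [h30 [h31 [h32 [h33 [h34 [h35 [h36 [h37 [h38 h39]]]]]]]]]]]]]]]]]]]]]]]]]]]]]]]]]]]]]]]; move: H.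
  rewrite /index_iota /= !big_cons big_nil /= ?mulr0z ?mulr1z ?mulrN1z ?mul0r ?add0r ?addr0 ?mul1r ?mulN1r => H.
  clear h0 h1 h2 h3 h4 h5 h6 h7 h8 h9 h12 h13 h14 h15 h16 h17 h18 h19 h20 h21 h22 h23 h24 h25 h26 h27 h34 h35 h37 h38.
  by case: H => H; lra.
move: K; rewrite /index_iota /= !big_cons big_nil /= ?mulr0z ?mulr1z ?mulrN1z ?mul0r ?add0r ?addr0 ?mul1r ?mulN1r => K; lra.
Qed.

Definition uu : 'I_6 -> R := fun k => (nth 0 [:: 3; 3; 2; 1; 1; 1] (val k))%:~R / 2.

Lemma partU : ~ proj_xy (SC (@P_U R)) uu.
Proof.
case=> w [HS Hc].
have c0 := Hc (@Ordinal 6 0 isT). have c1 := Hc (@Ordinal 6 1 isT).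
have c2 := Hc (@Ordinal 6 2 isT). have c3 := Hc (@Ordinal 6 3 isT).
have c4 := Hc (@Ordinal 6 4 isT). have c5 := Hc (@Ordinal 6 5 isT).
rewrite /uu /= in c0 c1 c2 c3 c4 c5.
have k0 := cutU0 HS.
have k1 := cutU1 HS.
have k2 := cutU2 HS.
have k3 := cutU3 HS.
have k4 := cutU4 HS.
have k5 := cutU5 HS.
have k6 := cutU6 HS.
have k7 := cutU7 HS.
have k8 := cutU8 HS.
have k9 := cutU9 HS.
have k10 := cutU10 HS.
have k11 := cutU11 HS.
have k12 := cutU12 HS.
have k13 := cutU13 HS.
have k14 := cutU14 HS.
have k15 := cutU15 HS.
clear Hc HS.
lra.
Qed.

Definition qs : seq int := [:: 2; 2; 0; 1; 1; 1; 2; 0; 2; 0; 0; 0].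
Definition ds : seq (seq int) :=
  [:: [:: -3; 1; 2; -1; 0; 0; -1; -1; -1; 1; 0; 1];
      [:: 1; -3; 2; 0; -1; 0; -1; 1; -1; -1; 0; 1];
      [:: 1; 1; -2; 0; 0; -1; -1; 1; -1; 1; 0; -1]].
Definition qv : 'I_12 -> int := fun k => nth 0 qs (nat_of_ord k).
Definition dv : 'I_3 -> 'I_12 -> int := fun j k => nth 0 (nth [::] ds (nat_of_ord j)) (nat_of_ord k).
Definition wL : 'I_12 -> R := fun k => (qv k)%:~R + (\sum_j dv j k)%:~R * 2^-1.

Lemma wL_in : P_Lplus wL.
Proof.
apply: PL_unflat; rewrite /PLf /Defs.coord /wL /qv /dv.
rewrite !inordK //.
rewrite !big_ord_recr !big_ord0 /=.

repeat split; lra.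
Qed.

Lemma wL_p j : P_Lplus (fun k => wL k + (dv j k)%:~R * 2^-1).
Proof.
case: j => [[|[|[|//]]] Hj]; apply: PL_unflat; rewrite /PLf /Defs.coord /wL /qv /dv !inordK //=;
  rewrite !big_ord_recr !big_ord0 /=; repeat split; lra.
Qed.

Lemma wL_m j : P_Lplus (fun k => wL k + (dv j k)%:~R * (- 2^-1)).
Proof.
case: j => [[|[|[|//]]] Hj]; apply: PL_unflat; rewrite /PLf /Defs.coord /wL /qv /dv !inordK //=;
  rewrite !big_ord_recr !big_ord0 /=; repeat split; lra.
Qed.

Lemma partL : proj_xy (SC (@P_Lplus R)) uu.
Proof.
exists wL; split.
  apply: (half_SC (q := qv) (d := dv)); [exact: wL_in | exact: wL_p | exact: wL_m].
case=> [[|[|[|[|[|[|//]]]]]] Hk]; rewrite /Defs.coord /wL /uu /qv /dv !inordK //=;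
  rewrite !big_ord_recr !big_ord0 /=; lra.
Qed.

Definition Ms : seq (seq int) := [:: [:: 1; 0; 0; 0; 0; 0; 0; 0; 0; 0; 0; 0; 0; 0; 0];
  [:: 0; 1; 0; 0; 0; 0; 0; 0; 0; 0; 0; 0; 0; 0; 0];
  [:: 0; 0; 1; 0; 0; 0; 0; 0; 0; 0; 0; 0; 0; 0; 0];
  [:: 0; 0; 0; 1; 0; 0; 0; 0; 0; 0; 0; 0; 0; 0; 0];
  [:: 0; 0; 0; 0; 1; 0; 0; 0; 0; 0; 0; 0; 0; 0; 0];
  [:: 0; 0; 0; 0; 0; 1; 0; 0; 0; 0; 0; 0; 0; 0; 0];
  [:: 0; 0; 0; 0; 0; 0; 1; 0; 1; 0; 0; 0; 0; 0; 0];
  [:: 0; 0; 0; 0; 0; 0; 0; 1; 1; 0; 0; 0; 0; 0; 0];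
  [:: 0; 0; 0; 0; 0; 0; 0; 0; 0; 1; 0; 1; 0; 0; 0];
  [:: 0; 0; 0; 0; 0; 0; 0; 0; 0; 0; 1; 1; 0; 0; 0];
  [:: 0; 0; 0; 0; 0; 0; 0; 0; 0; 0; 0; 0; 1; 0; 1];
  [:: 0; 0; 0; 0; 0; 0; 0; 0; 0; 0; 0; 0; 0; 1; 1]].
Definition Mm : 'I_12 -> 'I_15 -> int := fun k l => nth 0 (nth [::] Ms (nat_of_ord k)) (nat_of_ord l).

Lemma lmap_cd (v : 'I_15 -> R) k : (k < 12)%N ->
  cd (lmap Mm v) k = \sum_(0 <= l < 15) (nth 0 (nth [::] Ms k) l)%:~R * cd v l.
Proof.
move=> hk; rewrite /Defs.coord /lmap /Mm inordK //.
exact: (@sum_coord 14 (fun l x => (nth 0 (nth [::] Ms k) l)%:~R * x)).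
Qed.

Lemma sum15 (F : nat -> R) : \sum_(0 <= l < 15) F l =
  F 0%N + F 1%N + F 2%N + F 3%N + F 4%N + F 5%N + F 6%N + F 7%N + F 8%N + F 9%N + F 10%N + F 11%N + F 12%N + F 13%N + F 14%N.
Proof. by rewrite /index_iota /= !big_cons big_nil addr0 !addrA. Qed.

Lemma UtoL v : @P_U R v -> @P_Lplus R (lmap Mm v).
Proof.
move=> /PU_flat [h0 [h1 [h2 [h3 [h4 [h5 [h6 [h7 [h8 [h9 [h10 [h11 [h12 [h13 [h14 [h15 [h16 [h17 [h18 [h19 [h20 [h21 [h22 [h23 [h24 [h25 [h26 [h27 [h28 [h29 [h30 [h31 [h32 [h33 [h34 [h35 [h36 [h37 [h38 h39]]]]]]]]]]]]]]]]]]]]]]]]]]]]]]]]]]]]]]].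
apply: PL_unflat; rewrite /PLf !lmap_cd //.
rewrite !sum15 /=.
rewrite ?mulr0z ?mulr1z ?mulrN1z ?mul0r ?add0r ?addr0 ?mul1r ?mulN1r.
do 16 (split; first assumption).
split; first (clear h2 h3 h4 h5 h6 h7 h8 h9 h10 h11 h12 h13 h14 h15 h22 h23 h24 h25 h26 h27 h28 h29 h30 h31 h32 h33 h35 h36 h38 h39; lra).
split; first (clear h2 h3 h4 h5 h6 h7 h8 h9 h10 h11 h12 h13 h14 h15 h22 h23 h24 h25 h26 h27 h28 h29 h30 h31 h32 h33 h35 h36 h38 h39; lra).
split; first (clear h2 h3 h4 h5 h6 h7 h8 h9 h10 h11 h12 h13 h14 h15 h22 h23 h24 h25 h26 h27 h28 h29 h30 h31 h32 h33 h35 h36 h38 h39; lra).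
split; first (clear h2 h3 h4 h5 h6 h7 h8 h9 h10 h11 h12 h13 h14 h15 h22 h23 h24 h25 h26 h27 h28 h29 h30 h31 h32 h33 h35 h36 h38 h39; lra).
split; first (clear h0 h1 h2 h3 h4 h7 h8 h9 h10 h11 h12 h13 h14 h15 h16 h17 h18 h19 h20 h21 h28 h29 h30 h31 h32 h33 h34 h36 h37 h39; lra).
split; first (clear h0 h1 h2 h3 h4 h7 h8 h9 h10 h11 h12 h13 h14 h15 h16 h17 h18 h19 h20 h21 h28 h29 h30 h31 h32 h33 h34 h36 h37 h39; lra).
split; first (clear h0 h1 h2 h3 h4 h7 h8 h9 h10 h11 h12 h13 h14 h15 h16 h17 h18 h19 h20 h21 h28 h29 h30 h31 h32 h33 h34 h36 h37 h39; lra).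
split; first (clear h0 h1 h2 h3 h4 h7 h8 h9 h10 h11 h12 h13 h14 h15 h16 h17 h18 h19 h20 h21 h28 h29 h30 h31 h32 h33 h34 h36 h37 h39; lra).
split; first (clear h0 h1 h2 h3 h4 h5 h6 h7 h8 h9 h12 h13 h14 h15 h16 h17 h18 h19 h20 h21 h22 h23 h24 h25 h26 h27 h34 h35 h37 h38; lra).
split; first (clear h0 h1 h2 h3 h4 h5 h6 h7 h8 h9 h12 h13 h14 h15 h16 h17 h18 h19 h20 h21 h22 h23 h24 h25 h26 h27 h34 h35 h37 h38; lra).
split; first (clear h0 h1 h2 h3 h4 h5 h6 h7 h8 h9 h12 h13 h14 h15 h16 h17 h18 h19 h20 h21 h22 h23 h24 h25 h26 h27 h34 h35 h37 h38; lra).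
split; first (clear h0 h1 h2 h3 h4 h5 h6 h7 h8 h9 h12 h13 h14 h15 h16 h17 h18 h19 h20 h21 h22 h23 h24 h25 h26 h27 h34 h35 h37 h38; lra).
split; first (clear h2 h3 h4 h5 h6 h7 h8 h9 h10 h11 h12 h13 h14 h15 h22 h23 h24 h25 h26 h27 h28 h29 h30 h31 h32 h33 h35 h36 h38 h39; lra).
split; first (clear h0 h1 h2 h3 h4 h7 h8 h9 h10 h11 h12 h13 h14 h15 h16 h17 h18 h19 h20 h21 h28 h29 h30 h31 h32 h33 h34 h36 h37 h39; lra).
(clear h0 h1 h2 h3 h4 h5 h6 h7 h8 h9 h12 h13 h14 h15 h16 h17 h18 h19 h20 h21 h22 h23 h24 h25 h26 h27 h34 h35 h37 h38; lra).
Qed.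

Lemma part1 u : proj_xy (SC (@P_U R)) u -> proj_xy (SC (@P_Lplus R)) u.
Proof.
case=> w [HS Hc]; exists (lmap Mm w); split; first exact: (SC_lmap UtoL HS).
move=> k; rewrite -Hc lmap_cd; last by case: k => [k /= hk]; apply: ltn_trans hk _.
case: k {Hc} => [[|[|[|[|[|[|//]]]]]] Hk];
rewrite /index_iota /= !big_cons !big_nil /= ?mulr0z ?mulr1z ?mulrN1z ?mul0r ?add0r ?addr0 ?mul1r ?mulN1r //.
Qed.

End Gen.

Theorem theorem5 (R : realType) :
  (forall u : 'I_6 -> R, proj_xy (SC (@P_U R)) u -> proj_xy (SC (@P_Lplus R)) u) /\
  (exists u : 'I_6 -> R, proj_xy (SC (@P_Lplus R)) u /\ ~ proj_xy (SC (@P_U R)) u).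
Proof.
split; first by move=> u; apply: part1.
exists (uu R); split; [exact: partL | exact: partU].
Qed.
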